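(* Let $t$ be a positive integer, $s\ge 2$, and let $G=K(n_1,\dots,n_s)$ be a complete $s$-partite graph with $n_1\ge n_2\ge\cdots\ge n_s\ge 1$. Suppose exactly $r$ parts of $G$ have at least $2t$ vertices (so $n_1,\dots,n_r\ge 2t>n_{r+1}$), and let $\sigma_{r+1,s}=\sum_{j=r+1}^{s} n_j$. Then $$r+\left\lceil \frac{\sigma_{r+1,s}}{2t}\right\rceil\le \chi_t(G)\le r+\left\lceil \frac{\sigma_{r+1,s}}{t+1}\right\rceil.$$ Moreover both bounds are attained: for all integers $0\le r\le s$ with $s\ge 2$, the graph with $n_1=\cdots=n_r=2t+1$ and $n_{r+1}=\cdots=n_s=1$ attains the upper bound, and the graph with $n_1=\cdots=n_r=2t$ and $n_{r+1}=\cdots=n_s=t$ attains the lower bound.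
   Context: $K(n_1,\dots,n_s)$ denotes the complete $s$-partite graph whose parts have $n_1,\dots,n_s$ vertices. A map $f:V(G)\to\{1,\dots,k\}$ is a $t$-relaxed $k$-coloring if every vertex $u$ has at most $t$ neighbors $v$ with $f(v)=f(u)$; $\chi_t(G)$ is the minimum $k$ for which such a coloring exists. *)

(* Defs.v *)
From mathcomp Require Import all_boot.
Set Implicit Arguments. Unset Strict Implicit. Unset Printing Implicit Defensive.

(* Vertex set of the complete s-partite graph K(n_0,...,n_{s-1}):
   vertex (i, j) is the j-th vertex of part i. *)
Definition cmp_vert (s : nat) (n : 'I_s -> nat) : finType := {i : 'I_s & 'I_(n i)}.

Definition cmp_adj (s : nat) (n : 'I_s -> nat) : rel (cmp_vert n) :=
  fun u v => tag u != tag v.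
Arguments cmp_adj {s} n.

Definition relaxed_colorable (T : finType) (e : rel T) (t k : nat) : bool :=
  [exists f : {ffun T -> 'I_k},
     [forall u, #|[set v | e u v && (f v == f u)]| <= t]].

Lemma relaxed_colorable_exists (T : finType) (e : rel T) (t : nat) :
  irreflexive e -> exists k, relaxed_colorable e t k.
Proof.
move=> irr; exists #|T|; apply/existsP; exists [ffun u => enum_rank u].
apply/forallP => u.
suff -> : [set v | e u v && ([ffun u0 => enum_rank u0] v == [ffun u0 => enum_rank u0] u)] = set0
  by rewrite cards0.
apply/setP => v; rewrite !inE !ffunE.
case: eqP => [/enum_rank_inj -> | _]; first by rewrite irr.
by rewrite andbF.
Qed.

Lemma cmp_adj_irrefl (s : nat) (n : 'I_s -> nat) : irreflexive (cmp_adj n).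
Proof. by move=> u; rewrite /cmp_adj eqxx. Qed.

Definition chi_cmp (t s : nat) (n : 'I_s -> nat) : nat :=
  ex_minn ((@relaxed_colorable_exists _ _ t (@cmp_adj_irrefl s n))).

Definition ceil_div (a b : nat) : nat := (a + b.-1) %/ b.

(* sigma_{r+1,s}: sum of the sizes of parts with (0-based) index >= r *)
Definition sigma_from (s : nat) (n : 'I_s -> nat) (r : nat) : nat :=
  \sum_(i < s | r <= i) n i.

(* Main.v *)
Require Import Defs.
From mathcomp Require Import all_boot zify.
Set Implicit Arguments. Unset Strict Implicit. Unset Printing Implicit Defensive.

Section S.
Variables (s : nat) (n : 'I_s -> nat).
Local Notation V := (cmp_vert n).

Lemma sum_vert (F : V -> nat) :
  \sum_(v : V) F v = \sum_(i < s) \sum_(j < n i) F (Tagged (fun i => 'I_(n i)) j).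
Proof.
rewrite (@sig_big_dep _ _ _ _ _ xpredT (fun _ => xpredT) (fun i (j : 'I_(n i)) => F (Tagged (fun i => 'I_(n i)) j))) /=.
by apply: eq_bigr => -[i j].
Qed.

Lemma sum_part (F : V -> nat) (i : 'I_s) :
  \sum_(v : V | tag v == i) F v = \sum_(j < n i) F (Tagged (fun i => 'I_(n i)) j).
Proof.
rewrite big_mkcond sum_vert (bigD1 i) //=.
rewrite [X in _ + X]big1 ?addn0.
  by apply: eq_bigr => j _; rewrite eqxx.
by move=> k /negbTE kn; apply: big1 => j _; rewrite /= kn.
Qed.

Lemma card_part (A : {set V}) (i : 'I_s) :
  (forall v, v \in A -> tag v = i) -> #|A| <= n i.
Proof.
move=> H; apply: (@leq_trans #|[set v : V | tag v == i]|).
  by apply: subset_leq_card; apply/subsetP => v /H; rewrite inE => ->.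
rewrite -sum1_card (eq_bigl (fun v : V => tag v == i)); last by move=> v; rewrite inE.
by rewrite sum_part sum1_card card_ord.
Qed.

Section Col.
Variables (C : eqType) (g : V -> C) (t : nat).
Hypothesis gv : forall u, #|[set v | cmp_adj n u v && (g v == g u)]| <= t.

Lemma class_le (u : V) : #|[set v | g v == g u]| <= n (tag u) + t.
Proof.
rewrite -(cardsID [set v : V | tag v == tag u]).
apply: leq_add.
  by apply: card_part => v; rewrite !inE => /andP[_ /eqP].
apply: leq_trans (gv u); apply: subset_leq_card; apply/subsetP => v.
by rewrite !inE /cmp_adj => /andP[/negP a ->]; rewrite andbT eq_sym; apply/negP.
Qed.

Lemma class_mixed (u w : V) : g w == g u -> tag u != tag w ->
  #|[set v | g v == g u]| <= 2 * t.
Proof.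
move=> guw tuw.
rewrite -(cardsID [set v : V | tag v == tag u]) mul2n -addnn.
apply: leq_add.
  apply: leq_trans (gv w); apply: subset_leq_card; apply/subsetP => v.
  rewrite !inE /cmp_adj => /andP[a /eqP b]; rewrite b eq_sym tuw /=.
  by rewrite (eqP guw).
apply: leq_trans (gv u); apply: subset_leq_card; apply/subsetP => v.
by rewrite !inE /cmp_adj => /andP[/negP a ->]; rewrite andbT eq_sym; apply/negP.
Qed.
End Col.

Lemma weight_bound (k : nat) (f : V -> 'I_k) (w : V -> nat) (B : nat) :
  (forall u, \sum_(v | f v == f u) w v <= B) -> \sum_v w v <= k * B.
Proof.
move=> H.
rewrite (partition_big f xpredT) //=.
apply: leq_trans (_ : \sum_(c < k) B <= _); last by rewrite sum_nat_const card_ord.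
apply: leq_sum => c _.
case: (pickP (fun v => f v == c)) => [u /eqP fu | none].
  by rewrite -fu; apply: H.
by rewrite big_pred0.
Qed.

Lemma sum_const_le (P : pred V) (w : V -> nat) c :
  (forall v, P v -> w v <= c) -> \sum_(v | P v) w v <= c * #|[set v | P v]|.
Proof.
move=> H; apply: leq_trans (_ : \sum_(v | P v) c <= _); first exact: leq_sum.
rewrite sum_nat_const mulnC leq_mul2l; apply/orP; right.
by rewrite (eq_card (B := [set v | P v])) // => v; rewrite inE.
Qed.

Lemma sum_sub_part (P : pred V) (w : V -> nat) (i : 'I_s) :
  (forall v, P v -> tag v = i) -> \sum_(v | P v) w v <= \sum_(j < n i) w (Tagged (fun i => 'I_(n i)) j).
Proof.
move=> H; rewrite -sum_part [X in _ <= X]big_mkcond [X in X <= _]big_mkcond.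
apply: leq_sum => v _; case Pv: (P v) => //; by rewrite (H _ Pv) eqxx.
Qed.
End S.

Lemma chi_le t s (n : 'I_s -> nat) k : relaxed_colorable (cmp_adj n) t k -> chi_cmp t n <= k.
Proof. rewrite /chi_cmp; case: ex_minnP => m _ H; exact: H. Qed.

Lemma chi_col t s (n : 'I_s -> nat) : exists f : cmp_vert n -> 'I_(chi_cmp t n),
  forall u, #|[set v | cmp_adj n u v && (f v == f u)]| <= t.
Proof.
rewrite /chi_cmp; case: ex_minnP => m /existsP[f /forallP H] _.
by exists f.
Qed.

Lemma colorable_nat t s (n : 'I_s -> nat) k (g : cmp_vert n -> nat) :
  0 < k -> (forall v, g v < k) ->
  (forall u, #|[set v | cmp_adj n u v && (g v == g u)]| <= t) ->
  relaxed_colorable (cmp_adj n) t k.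
Proof.
case: k => // k _ gk H; apply/existsP; exists [ffun v => inord (g v)].
apply/forallP => u; apply: leq_trans (H u); apply: subset_leq_card.
apply/subsetP => v; rewrite !inE !ffunE => /andP[-> /eqP e]; apply/eqP.
by move: (congr1 val e); rewrite /= !inordK.
Qed.

Lemma sum_lt n a : a <= n -> \sum_(j < n) (j < a : nat) = a.
Proof.
move=> an; rewrite -(big_mkord xpredT (fun j => (j < a : nat))) (@big_cat_nat _ _ _ a 0 n _ _ (leq0n a) an) /=.
rewrite (eq_big_nat _ _ (F2 := fun _ => 1)); last by move=> i /andP[_ ->].
rewrite [X in _ + X](eq_big_nat _ _ (F2 := fun _ => 0)); last by move=> i /andP[]; rewrite leqNgt => /negbTE ->.
by rewrite !sum_nat_const_nat muln1 muln0 addn0 subn0.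
Qed.

Lemma sum_ite s r a b : r <= s -> \sum_(i < s) (if i < r then a else b) = a * r + b * (s - r).
Proof.
move=> rs; rewrite -(big_mkord xpredT (fun i => if i < r then a else b)) (@big_cat_nat _ _ _ r 0 s _ _ (leq0n r) rs) /=.
rewrite (eq_big_nat _ _ (F2 := fun _ => a)); last by move=> i /andP[_ ->].
rewrite [X in _ + X](eq_big_nat _ _ (F2 := fun _ => b)); last by move=> i /andP[]; rewrite leqNgt => /negbTE ->.
by rewrite !sum_nat_const_nat subn0 mulnC [b * _]mulnC.
Qed.

Lemma ceil_le d r x k : 0 < d -> d * r + x <= k * d -> r + (x + d.-1) %/ d <= k.
Proof.
move=> d0 h.
have rk : r <= k by rewrite -(leq_pmul2l d0); lia.
have e : k * d = (k - r) * d + r * d by rewrite -mulnDl subnK.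
have : (x + d.-1) %/ d < (k - r).+1 by rewrite ltn_divLR //; nia.
lia.
Qed.
Lemma lt_ceil a b d : 0 < d -> a < b -> a %/ d < (b + d.-1) %/ d.
Proof.
move=> d0 ab; rewrite ltn_divLR //.
have := divn_eq (b + d.-1) d; have := ltn_pmod (b + d.-1) d0.
set q := (b + d.-1) %/ d; set rr := (b + d.-1) %% d. nia.
Qed.
Lemma half_uniq a b c : a %/ 2 = c %/ 2 -> b %/ 2 = c %/ 2 -> a != c -> b != c -> a = b.
Proof. lia. Qed.

Lemma sigma_ite s (n : 'I_s -> nat) r :
  sigma_from n r = \sum_(i < s) (if i < r then 0 else n i).
Proof. by rewrite /sigma_from big_mkcond; apply: eq_bigr => i _; rewrite leqNgt; case: (i < r). Qed.

Lemma part1_lower t (ht : 0 < t) s (n : 'I_s -> nat) r :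
  r <= s -> (forall i : 'I_s, (i < r) = (2 * t <= n i)) ->
  r + ceil_div (sigma_from n r) (2 * t) <= chi_cmp t n.
Proof.
move=> rs hr.
have [f fv] := chi_col t n.
pose w := fun v : cmp_vert n => if tag v < r then (tagged v < 2 * t : nat) else 1.
have hB : forall u, \sum_(v | f v == f u) w v <= 2 * t.
  move=> u.
  case: (pickP (fun x => (f x == f u) && (tag u != tag x))) => [x /andP[fx tx] | none].
    have h1 : forall v, f v == f u -> w v <= 1.
      by move=> v _; rewrite /w; case: (tag v < r) => //; case: (_ < _).
    apply: leq_trans (@sum_const_le _ _ (fun v => f v == f u) w 1 h1) _.
    by rewrite mul1n; exact: class_mixed fv _ _ fx tx.
  have h2 : forall v, f v == f u -> tag v = tag u.
    by move=> v fv'; have := none v; rewrite fv' /= => /negbFE /eqP.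
  apply: leq_trans (@sum_sub_part _ _ (fun v => f v == f u) w (tag u) h2) _.
    rewrite /w /=; case tr: (tag u < r).
      by rewrite sum_lt // -hr.
    rewrite sum_nat_const card_ord muln1; move: (hr (tag u)); rewrite tr; move/esym/negbT; rewrite -ltnNge; exact: ltnW.
have := weight_bound hB.
have -> : \sum_v w v = 2 * t * r + sigma_from n r.
  rewrite sum_vert sigma_ite.
  rewrite (eq_bigr (fun i : 'I_s => (if i < r then 2 * t else 0) + (if i < r then 0 else n i))); last first.
    move=> i _; rewrite /w /=; case: ifP => ir.
      by rewrite sum_lt ?addn0 // -hr.
    by rewrite sum_nat_const card_ord muln1.
  by rewrite big_split /= sum_ite // mul0n addn0.
rewrite mulnC => h; rewrite /ceil_div; apply: ceil_le => //; lia.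
Qed.

Lemma card_small s (n : 'I_s -> nat) r :
  #|[set v : cmp_vert n | r <= tag v]| = sigma_from n r.
Proof.
rewrite -sum1_card big_mkcond sum_vert sigma_ite; apply: eq_bigr => i _ /=.
rewrite (eq_bigr (fun _ => if i < r then 0 else 1)); last by move=> j _; rewrite inE /= leqNgt; case: (i < r).
by rewrite sum_nat_const card_ord; case: (i < r); rewrite ?muln0 ?muln1.
Qed.

Lemma part1_upper t s (n : 'I_s -> nat) r :
  0 < s -> (forall i : 'I_s, 0 < n i) ->
  chi_cmp t n <= r + ceil_div (sigma_from n r) t.+1.
Proof.
move=> s0 npos.
pose S := [set v : cmp_vert n | r <= tag v].
pose idx := fun v : cmp_vert n => index v (enum S).
pose g := fun v : cmp_vert n => if tag v < r then val (tag v) else r + idx v %/ t.+1.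
have gk : forall v, g v < r + ceil_div (sigma_from n r) t.+1.
  move=> v; rewrite /g; case: ifP => vr; first exact: ltn_addr.
  rewrite ltn_add2l /ceil_div; apply: lt_ceil => //.
  rewrite -card_small cardE /idx index_mem mem_enum inE; lia.
apply: chi_le; apply: (colorable_nat (g := g)) => //.
  pose i0 : 'I_s := Ordinal s0.
  pose v0 : cmp_vert n := Tagged (fun i => 'I_(n i)) (Ordinal (npos i0)).
  exact: leq_ltn_trans (leq0n _) (gk v0).
move=> u; case ur: (tag u < r).
  suff -> : [set v | cmp_adj n u v && (g v == g u)] = set0 by rewrite cards0.
  apply/setP => v; rewrite !inE /cmp_adj /g ur.
  case: ifP => vr; last first.
    by apply/negbTE; rewrite negb_and; apply/orP; right; apply/negP => /eqP e; have h : val (tag u) < r := ur; by move: h; rewrite -e ltnNge leq_addr.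
  by case: (eqVneq (tag u) (tag v)) => [//|ne] /=; apply/negP => /eqP /val_inj e; move: ne; rewrite e eqxx.
set X := [set v | _].
have uX : u \notin X by rewrite inE /cmp_adj eqxx.
have hX : forall v, v \in u |: X -> r <= tag v /\ idx v %/ t.+1 = idx u %/ t.+1.
  move=> v; rewrite !inE => /orP[/eqP -> | /andP[_]]; first by split => //; rewrite leqNgt ur.
  rewrite /g ur; case: ifP => vr /eqP.
    by move=> e; have h : val (tag v) < r := vr; move: h; rewrite e ltnNge leq_addr.
  by move=> /eqP; rewrite eqn_add2l => /eqP e; split => //; rewrite leqNgt vr.
have : #|u |: X| <= t.+1.
  pose h := fun v : cmp_vert n => Ordinal (ltn_pmod (idx v) (ltn0Sn t)).
  apply: leq_trans (_ : #|'I_t.+1| <= t.+1); last by rewrite card_ord.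
  apply: (@leq_card_in _ _ h) => v1 v2 h1 h2 e.
  have [r1 q1] := hX _ h1; have [r2 q2] := hX _ h2.
  have m : idx v1 %% t.+1 = idx v2 %% t.+1 by move: (congr1 val e).
  have ie : idx v1 = idx v2 by rewrite (divn_eq (idx v1) t.+1) (divn_eq (idx v2) t.+1) q1 q2 m.
  have s1 : v1 \in enum S by rewrite mem_enum inE.
  have s2 : v2 \in enum S by rewrite mem_enum inE.
  by rewrite -(nth_index v1 s1) -(nth_index v1 s2); congr nth.
by rewrite cardsU1 uX add1n.
Qed.

Lemma fam1 t (ht : 0 < t) s r : 2 <= s -> r <= s ->
  let n := fun i : 'I_s => if i < r then (2 * t).+1 else 1 in
  chi_cmp t n = r + ceil_div (sigma_from n r) t.+1.
Proof.
move=> hs rs n.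
have npos : forall i, 0 < n i by move=> i; rewrite /n; case: (i < r).
have sig : sigma_from n r = s - r.
  rewrite sigma_ite (eq_bigr (fun i : 'I_s => if i < r then 0 else 1)); last first.
    by move=> i _; rewrite /n; case: (i < r).
  by rewrite sum_ite // mul0n mul1n.
apply/eqP; rewrite eqn_leq part1_upper ?andbT //; last by lia.
have [f fv] := chi_col t n.
pose w := fun v : cmp_vert n => if tag v < r then t.+1 else (2 * t).+1.
have hB : forall u, \sum_(v | f v == f u) w v <= t.+1 * (2 * t).+1.
  move=> u.
  case: (pickP (fun x => (f x == f u) && (tag u != tag x))) => [x /andP[fx tx] | none].
    have cm := class_mixed fv fx tx.
    case: (pickP (fun y => (f y == f u) && (r <= tag y))) => [y /andP[fy ry] | nsm].
      have cl := class_le fv y.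
      have ny : n (tag y) = 1 by rewrite /n ltnNge ry.
      rewrite ny (eq_card (B := [set v | f v == f u])) in cl; last first.
        by move=> v; rewrite !inE (eqP fy).
      have h1 : forall v, f v == f u -> w v <= (2 * t).+1.
        by move=> v _; rewrite /w; case: (tag v < r) => //; lia.
      apply: leq_trans (@sum_const_le _ _ (fun v => f v == f u) w _ h1) _.
      by rewrite add1n in cl; rewrite [X in _ <= X]mulnC leq_mul2l cl orbT.
    have h1 : forall v, f v == f u -> w v <= t.+1.
      move=> v fvu; have := nsm v; rewrite fvu /= => /negbT; rewrite -ltnNge => vr.
      by rewrite /w vr.
    apply: leq_trans (@sum_const_le _ _ (fun v => f v == f u) w _ h1) _.
    rewrite leq_mul2l; apply/orP; right; lia.
  have h2 : forall v, f v == f u -> tag v = tag u.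
    by move=> v fv'; have := none v; rewrite fv' /= => /negbFE /eqP.
  apply: leq_trans (@sum_sub_part _ _ (fun v => f v == f u) w (tag u) h2) _.
  rewrite /w /= sum_nat_const card_ord /n; case: (tag u < r); lia.
have := weight_bound hB.
have -> : \sum_v w v = t.+1 * (2 * t).+1 * r + (2 * t).+1 * (s - r).
  rewrite sum_vert -sum_ite //; apply: eq_bigr => i _.
  rewrite /w /= sum_nat_const card_ord /n; case: (i < r); lia.
move=> h; rewrite sig /ceil_div; apply: ceil_le => //.
have : (2 * t).+1 * (t.+1 * r + (s - r)) <= (2 * t).+1 * (chi_cmp t n * t.+1) by lia.
by rewrite leq_pmul2l.
Qed.

Lemma fam2 t (ht : 0 < t) s r : 2 <= s -> r <= s ->
  let n := fun i : 'I_s => if i < r then 2 * t else t in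
  chi_cmp t n = r + ceil_div (sigma_from n r) (2 * t).
Proof.
move=> hs rs n.
have hr : forall i : 'I_s, (i < r) = (2 * t <= n i).
  by move=> i; rewrite /n; case: (i < r); lia.
apply/eqP; rewrite eqn_leq (part1_lower ht rs hr) andbT.
have sig : sigma_from n r = (s - r) * t.
  rewrite sigma_ite (eq_bigr (fun i : 'I_s => if i < r then 0 else t)); last first.
    by move=> i _; rewrite /n; case: (i < r).
  by rewrite sum_ite // mul0n mulnC.
pose g := fun v : cmp_vert n => if tag v < r then val (tag v) else r + (tag v - r) %/ 2.
have gk : forall v, g v < r + ceil_div (sigma_from n r) (2 * t).
  move=> v; rewrite /g; case: ifP => vr; first exact: ltn_addr.
  rewrite ltn_add2l sig /ceil_div -[X in X <= _]/(((tag v - r) %/ 2).+1) leq_divRL; last lia.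
  have h1 := leq_divM (tag v - r) 2.
  have h2 : tag v < s := ltn_ord _.
  have h3 : r <= tag v by rewrite leqNgt vr.
  move: h1 h2 h3; set x := nat_of_ord (tag v); set q := (x - r) %/ 2 => h1 h2 h3.
  clearbody q x.
  have h4 : (q * 2).+1 <= s - r by lia.
   have := leq_mul h4 (leqnn t); nia.
apply: chi_le; apply: (colorable_nat (g := g)) => //.
  have s0 : 0 < s by lia.
  pose i0 : 'I_s := Ordinal s0.
  have npos : 0 < n i0 by rewrite /n; case: (i0 < r); lia.
  pose v0 : cmp_vert n := Tagged (fun i => 'I_(n i)) (Ordinal npos).
  exact: leq_ltn_trans (leq0n _) (gk v0).
move=> u; case ur: (tag u < r).
  suff -> : [set v | cmp_adj n u v && (g v == g u)] = set0 by rewrite cards0.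
  apply/setP => v; rewrite !inE /cmp_adj /g ur.
  case: ifP => vr; last first.
    by apply/negbTE; rewrite negb_and; apply/orP; right; apply/negP => /eqP e; have h : val (tag u) < r := ur; move: h; rewrite -e ltnNge leq_addr.
  by case: (eqVneq (tag u) (tag v)) => [//|ne] /=; apply/negP => /eqP /val_inj e; move: ne; rewrite e eqxx.
set X := [set v | _].
have hX : forall v, v \in X -> r <= tag v /\ (tag v - r) %/ 2 = (tag u - r) %/ 2 /\ tag v != tag u.
  move=> v; rewrite !inE /cmp_adj /g ur; case: ifP => vr /andP[tuv /eqP].
    by move=> e; have h : val (tag v) < r := vr; move: h; rewrite e ltnNge leq_addr.
  move=> /eqP; rewrite eqn_add2l => /eqP e; split; first by rewrite leqNgt vr.
  by split => //; rewrite eq_sym.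
case: (set_0Vmem X) => [-> | [v0 v0X]]; first by rewrite cards0.
have [r0 [q0 t0]] := hX _ v0X.
apply: leq_trans (_ : n (tag v0) <= t); last by rewrite /n ltnNge r0.
apply: card_part => v vX.
have [r1 [q1 t1]] := hX _ vX.
apply: ord_inj.
have ur' : r <= tag u by rewrite leqNgt ur.
have a1 : (tag v - r) = (tag v0 - r).
  apply: (@half_uniq _ _ (tag u - r)) => //.
    apply/negP => /eqP e; move: t1; have -> : tag v = tag u by apply: ord_inj; lia.
    by rewrite eqxx.
  apply/negP => /eqP e; move: t0; have -> : tag v0 = tag u by apply: ord_inj; lia.
  by rewrite eqxx.
lia.
Qed.

Unset Implicit Arguments.

Theorem theorem2p4 (t : nat) (ht : 0 < t) :
  (forall (s : nat) (n : 'I_s -> nat) (r : nat),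
      2 <= s ->
      (forall i j : 'I_s, i <= j -> n j <= n i) ->
      (forall i : 'I_s, 0 < n i) ->
      r <= s ->
      (forall i : 'I_s, (i < r) = (2 * t <= n i)) ->
      r + ceil_div (sigma_from n r) (2 * t) <= chi_cmp t n
      /\ chi_cmp t n <= r + ceil_div (sigma_from n r) t.+1)
  /\
  (forall s r : nat, 2 <= s -> r <= s ->
      let n := fun i : 'I_s => if i < r then (2 * t).+1 else 1 in
      chi_cmp t n = r + ceil_div (sigma_from n r) t.+1)
  /\
  (forall s r : nat, 2 <= s -> r <= s ->
      let n := fun i : 'I_s => if i < r then 2 * t else t in
      chi_cmp t n = r + ceil_div (sigma_from n r) (2 * t)).
Proof.
split; [|split].
- move=> s n r hs _ npos rs hr; split; first exact: part1_lower.
  apply: part1_upper => //; lia.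
- move=> s r hs rs; exact: fam1.
- move=> s r hs rs; exact: fam2.
Qed.
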